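(* Let $a,b,g,h>0$ and fix real numbers $x,y$. Consider all pairs $(\theta,\psi)\in\mathbb{R}^2$ such that, with $A=(a\,\mathrm{ch}\,\theta,a\,\mathrm{sh}\,\theta)$ and $B=(g+b\,\mathrm{ch}\,\psi,b\,\mathrm{sh}\,\psi)$, the vector $B-A$ is future-pointing spacelike with $\langle B-A,B-A\rangle=h^2$; for such a pair write $B-A=h(\mathrm{ch}\,\alpha,\mathrm{sh}\,\alpha)$ with $\alpha\in\mathbb{R}$ and define the coupler point $$X(\theta,\psi)=A+x(\mathrm{ch}\,\alpha,\mathrm{sh}\,\alpha)+y(\mathrm{sh}\,\alpha,\mathrm{ch}\,\alpha).$$ Then the coupler curve $\{X(\theta,\psi)\}$ is algebraic of degree six: there is a nonzero real polynomial $P(X,Y)$ of total degree $6$ vanishing at every coupler point.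
   Context: $\mathbb{R}^2$ carries the Lorentzian form $\langle u,v\rangle=u_1v_1-u_2v_2$; a vector $u$ is future-pointing spacelike if $u_1>|u_2|$. $\mathrm{ch},\mathrm{sh}$ are hyperbolic cosine and sine. This is a Minkowskian planar 4R linkage with fixed pivots $O=(0,0)$, $C=(g,0)$, input crank $OA$ of length $a$, output crank $CB$ of length $b$, coupler $AB$ of length $h$; $(x,y)$ are the coordinates of a point rigidly attached to the coupler in the moving Minkowskian frame located at $A$ with first axis along $AB$. *)

(* Defs.v *)
From Stdlib Require Import Reals.
From HB Require Import structures.
From mathcomp Require Import all_boot all_algebra.
From mathcomp Require Import Rstruct.
From mathcomp Require Import mpoly.

Set Implicit Arguments.
Unset Strict Implicit.
Unset Printing Implicit Defensive.

Local Open Scope R_scope.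

Definition lor (u v : R * R) : R := fst u * fst v - snd u * snd v.

Definition fut_spacelike (u : R * R) : Prop := fst u > Rabs (snd u).

Definition coupler_point (a b g h x y : R) (P : R * R) : Prop :=
  exists theta psi alpha : R,
    let A := (a * cosh theta, a * sinh theta) in
    let B := (g + b * cosh psi, b * sinh psi) in
    let u := (fst B - fst A, snd B - snd A) in
    fut_spacelike u /\ lor u u = h ^ 2 /\
    u = (h * cosh alpha, h * sinh alpha) /\
    P = (fst A + x * cosh alpha + y * sinh alpha,
         snd A + x * sinh alpha + y * cosh alpha).

Definition eval2 (p : {mpoly R[2]}) (X Y : R) : R :=
  meval (fun i : 'I_2 => if val i == 0%N then X else Y) p.

(* Main.v *)
Require Import Defs.
From Stdlib Require Import Reals Lra.
From mathcomp Require Import all_boot all_order all_algebra.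
From mathcomp Require Import Rstruct.
From mathcomp Require Import mpoly.

Section CS. Local Open Scope R_scope.
Lemma chsh (t : R) : cosh t * cosh t - sinh t * sinh t = 1.
Proof.
unfold cosh, sinh.
assert (H : exp t * exp (- t) = 1).
{ rewrite <- exp_plus. rewrite Rplus_opp_r. apply exp_0. }
rewrite <- H; field.
Qed.
End CS.
From mathcomp Require Import ring lra zify.

Local Open Scope ring_scope.
Import Order.TTheory GRing.Theory Num.Theory.

Section Gen.
Variables (T : comRingType) (t a b g h x y X Y : T).
Definition gQ := X*X - Y*Y.
Definition gk1 := x*x - y*y - a*a.
Definition gk2 := g*g - t*g*X + (h-x)*(h-x) - y*y - b*b.
Definition gK1 := gQ + gk1.
Definition gK2 := gQ + gk2.
Definition gL1 := t*(x*X - y*Y).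
Definition gM1 := t*(y*X - x*Y).
Definition gL2 := -(t*((h-x)*(X-g) + y*Y)).
Definition gM2 := t*(y*(X-g) + (h-x)*Y).
Definition gU := gK1*gM2 - gK2*gM1.
Definition gV := gL1*gK2 - gL2*gK1.
Definition gD := gL1*gM2 - gL2*gM1.
Definition gF := gU*gU - gV*gV - gD*gD.
Definition gT := -(t*t*h*h) * ((X-Y)*(X+Y)) * ((X-Y)*(X+Y)) * ((X-Y)*(X+Y)).
Definition gu1 := t*h*Y - t*y*g.
Definition gv1 := t*h*X - t*(h-x)*g.
Definition gu0 := gk1*gM2 - gk2*gM1.
Definition gv0 := gL1*gk2 - gL2*gk1.
Definition gw := -(t*t*h*y*g*Y) - t*t*h*y*g*Y + t*t*y*y*g*g + t*t*h*(h-x)*g*X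
   + t*t*h*(h-x)*g*X - t*t*(h-x)*(h-x)*g*g.
Definition gE := gQ*gQ*gw + gQ*(gu1*gu0+gu1*gu0 - gv1*gv0 - gv1*gv0) + gu0*gu0 - gv0*gv0 - gD*gD.

Lemma gF_split : gF = gT + gE.
Proof.
rewrite /gF /gT /gE /gu1 /gv1 /gu0 /gv0 /gw /gU /gV /gD /gK1 /gK2 /gL1 /gL2 /gM1 /gM2 /gQ /gk1 /gk2.
ring.
Qed.
End Gen.

Lemma key (a b g h x y ct st cp sp c s : R) :
  ct*ct - st*st = 1 -> cp*cp - sp*sp = 1 -> c*c - s*s = 1 ->
  h*c = g + b*cp - a*ct -> h*s = b*sp - a*st ->
  gF _ 2 a b g h x y (a*ct + x*c + y*s) (a*st + x*s + y*c) = 0.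
Proof.
move=> Ht Hp Ha Hc Hs.
set X := a*ct + x*c + y*s; set Y := a*st + x*s + y*c.
set K1 := gK1 _ a x y X Y; set K2 := gK2 _ 2 b g h x y X Y.
set L1 := gL1 _ 2 x y X Y; set L2 := gL2 _ 2 g h x y X Y.
set M1 := gM1 _ 2 x y X Y; set M2 := gM2 _ 2 g h x y X Y.
have e1 : K1 - (L1*c + M1*s) = 0.
  have -> : K1 - (L1*c + M1*s) = a*a*(ct*ct - st*st - 1) - (x*x - y*y)*(c*c-s*s-1).
    by rewrite /K1 /L1 /M1 /gK1 /gQ /gk1 /gL1 /gM1 /X /Y; ring.
  by rewrite Ht Ha; ring.
have Hp1 : a*ct - g + h*c = b*cp by rewrite Hc; ring.
have Hq1 : a*st + h*s = b*sp by rewrite Hs; ring.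
have e2 : K2 - (L2*c + M2*s) = 0.
  have -> : K2 - (L2*c + M2*s) = (a*ct - g + h*c)*(a*ct - g + h*c)
       - (a*st + h*s)*(a*st + h*s) - b*b - ((h-x)*(h-x) - y*y)*(c*c-s*s-1).
    by rewrite /K2 /L2 /M2 /gK2 /gQ /gk2 /gL2 /gM2 /X /Y; ring.
  rewrite Hp1 Hq1 Ha.
  have -> : b * cp * (b * cp) - b * sp * (b * sp) = b*b*(cp*cp - sp*sp) by ring.
  by rewrite Hp; ring.
have -> : gF _ 2 a b g h x y X Y =
   (K1 - (L1*c + M1*s)) * M2 * (gU _ 2 a b g h x y X Y + c * gD _ 2 g h x y X Y)
 - (K2 - (L2*c + M2*s)) * M1 * (gU _ 2 a b g h x y X Y + c * gD _ 2 g h x y X Y)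
 - (L1 * (K2 - (L2*c + M2*s)) - L2 * (K1 - (L1*c + M1*s))) *
     (gV _ 2 a b g h x y X Y + s * gD _ 2 g h x y X Y)
 + (gD _ 2 g h x y X Y)^+2 * (c*c - s*s - 1).
  by rewrite /gF /gU /gV /gD -/K1 -/K2 -/L1 -/L2 -/M1 -/M2; ring.
by rewrite e1 e2 Ha; ring.
Qed.

Definition pX : {mpoly R[2]} := 'X_(@ord0 1).
Definition pY : {mpoly R[2]} := 'X_(@ord_max 1).
Definition cst (c : R) : {mpoly R[2]} := c%:MP.

Lemma eval_gF (t a b g h x y X Y : R) :
  eval2 (gF _ (cst t) (cst a) (cst b) (cst g) (cst h) (cst x) (cst y) pX pY) X Y
  = gF _ t a b g h x y X Y.
Proof.
rewrite /eval2 /gF /gU /gV /gD /gK1 /gK2 /gL1 /gL2 /gM1 /gM2 /gQ /gk1 /gk2 /cst /pX /pY.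
by rewrite !(mevalD, mevalN, mevalM, mevalC, mevalXU).
Qed.

Lemma mle_add (p q : {mpoly R[2]}) m k n :
  (msize p <= m)%N -> (msize q <= k)%N -> (maxn m k <= n)%N -> (msize (p + q) <= n)%N.
Proof.
move=> hp hq hn; apply: leq_trans (msizeD_le _ _) _.
by apply: leq_trans hn; rewrite geq_max !leq_max hp hq orbT.
Qed.

Lemma mle_opp (p : {mpoly R[2]}) n : (msize p <= n)%N -> (msize (- p) <= n)%N.
Proof. by rewrite msizeN. Qed.

Lemma mle_mul (p q : {mpoly R[2]}) m k n :
  (msize p <= m)%N -> (msize q <= k)%N -> ((m + k).-1 <= n)%N -> (msize (p * q) <= n)%N.
Proof.
move=> hp hq hn.
have [->|p0] := eqVneq p 0; first by rewrite mul0r msize0.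
have [->|q0] := eqVneq q 0; first by rewrite mulr0 msize0.
rewrite msizeM //; apply: leq_trans hn.
by rewrite -!subn1 leq_sub2r // leq_add.
Qed.

Lemma mle_C c : (msize (cst c) <= 1)%N.
Proof. by rewrite /cst msizeC; case: (c != 0). Qed.

Lemma mle_X : (msize pX <= 2)%N.
Proof. by rewrite /pX msizeX mdeg1. Qed.
Lemma mle_Y : (msize pY <= 2)%N.
Proof. by rewrite /pY msizeX mdeg1. Qed.

Ltac side := first [exact: leqnn | done].
Ltac bnd :=
  lazymatch goal with |- is_true (leq (mmeasure _ ?p) _) =>
  lazymatch p with
  | cst _ => first [exact: mle_C | apply: leq_trans (mle_C _) _; done]
  | pX => first [exact: mle_X | apply: leq_trans mle_X _; done]
  | pY => first [exact: mle_Y | apply: leq_trans mle_Y _; done]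
  | (- _)%R => apply: mle_opp; bnd
  | (_ + _)%R => eapply mle_add; [bnd | bnd | side]
  | (_ * _)%R => eapply mle_mul; [bnd | bnd | side]
  end end.


Lemma bnd_E (t a b g h x y : R) :
  (msize (gE _ (cst t) (cst a) (cst b) (cst g) (cst h) (cst x) (cst y) pX pY) <= 6)%N.
Proof.
rewrite /gE /gu1 /gv1 /gu0 /gv0 /gw /gD /gL1 /gL2 /gM1 /gM2 /gQ /gk1 /gk2.
bnd.
Qed.

Lemma msize_ex1 (p : {mpoly R[2]}) : (msize p <= 1)%N -> eval2 p 0 0 != 0 -> msize p = 1%N.
Proof.
move=> hp he; apply/eqP; rewrite eqn_leq hp lt0n msize_poly_eq0.
by apply: contraNneq he => ->; rewrite /eval2 meval0.
Qed.

Lemma msize_ex2 (p : {mpoly R[2]}) : (msize p <= 2)%N -> eval2 p 0 0 != eval2 p 1 0 -> msize p = 2%N.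
Proof.
move=> hp he; apply/eqP; rewrite eqn_leq hp /=.
rewrite ltnNge; apply/negP => h1.
move: he; rewrite (msize1_polyC h1) /eval2 !mevalC.
by rewrite eqxx.
Qed.

Lemma msizeM' (p q : {mpoly R[2]}) m k : msize p = m.+1 -> msize q = k.+1 -> msize (p * q) = (m + k).+1.
Proof.
move=> hp hq.
have p0 : p != 0 by apply/negP => /eqP p0; move: hp; rewrite p0 msize0.
have q0 : q != 0 by apply/negP => /eqP q0; move: hq; rewrite q0 msize0.
by rewrite msizeM // hp hq addSn addnS.
Qed.

Lemma msize_T (h : R) : 0 < h ->
  msize (gT _ (cst 2) (cst h) pX pY) = 7%N.
Proof.
move=> hh.
have hA : msize ((pX - pY) * (pX + pY)) = 3%N.
  apply: (@msizeM' _ _ 1 1).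
    apply: msize_ex2; first by bnd.
    rewrite /eval2 /pX /pY !(mevalD, mevalN, mevalXU) /=.
    by rewrite !subr0 eq_sym oner_neq0.
  apply: msize_ex2; first by bnd.
  rewrite /eval2 /pX /pY !(mevalD, mevalN, mevalXU) /=.
  by rewrite !addr0 eq_sym oner_neq0.
have hc : msize (- (cst 2 * cst 2 * cst h * cst h)) = 1%N.
  apply: msize_ex1; first by bnd.
  rewrite /eval2 /cst !(mevalN, mevalM, mevalC) oppr_eq0.
  have h2 : (2:R) != 0.
    by apply/eqP; apply: not_0_IZR.
  have h0 : h != 0 by rewrite gt_eqF.
  by rewrite !mulf_neq0.
rewrite /gT (@msizeM' _ _ 4 2) //.
rewrite (@msizeM' _ _ 2 2) //.
by rewrite (@msizeM' _ _ 0 2).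
Qed.

Lemma msize_sum7 (p q : {mpoly R[2]}) : msize p = 7%N -> (msize q <= 6)%N -> msize (p + q) = 7%N.
Proof.
move=> hp hq; apply/eqP; rewrite eqn_leq; apply/andP; split.
  apply: leq_trans (msizeD_le _ _) _; rewrite geq_max hp leqnn /=.
  exact: leq_trans hq _.
have e : p = (p + q) - q by rewrite addrK.
have := msizeD_le (p + q) (- q); rewrite -e msizeN hp.
move: hq; lia.
Qed.

Local Close Scope ring_scope.
Local Open Scope R_scope.

Theorem mainTheorem7 (a b g h x y : R) :
  0 < a -> 0 < b -> 0 < g -> 0 < h ->
  exists p : {mpoly R[2]},
    p != 0%R /\ msize p = 7%N /\
    (forall X Y : R, coupler_point a b g h x y (X, Y) -> eval2 p X Y = 0).
Proof.
move=> ha hb hg hh.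
exists (gF _ (cst 2) (cst a) (cst b) (cst g) (cst h) (cst x) (cst y) pX pY).
have hs : msize (gF _ (cst 2) (cst a) (cst b) (cst g) (cst h) (cst x) (cst y) pX pY) = 7%N.
  rewrite gF_split; apply: msize_sum7; last exact: bnd_E.
  by apply: msize_T; apply/RltP.
split; last split => //.
  by apply/negP => /eqP e; move: hs; rewrite e msize0.
move=> X Y [th [ps [al /= [Hf [Hl [Hu HP]]]]]].
rewrite eval_gF; case: Hu => Hc Hs; case: HP => -> ->.
apply: (@key a b g h x y (cosh th) (sinh th) (cosh ps) (sinh ps) (cosh al) (sinh al));
  try exact: chsh.
  exact: (esym Hc).
exact: (esym Hs).
Qed.
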